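(* Let $R$ be a nonempty set of permutations and let $f(x),g(x)$ be formal power series (or polynomials) with $g$ invertible such that $$\sum_{n\ge0}|\mathfrak S_n(1243,2143,R)|x^n=1+x\frac{f(x)}{g(x)}.$$ Then $$\sum_{n\ge0}|\mathfrak S_n(1243,2143,Rn)|x^n=1+x\frac{g(x)}{(1-x)g(x)-xf(x)}.$$
   Context: $\mathfrak S_n(S)$ denotes the permutations of $\{1,\dots,n\}$ avoiding every pattern in $S$ (no subsequence with the same relative order as a pattern). $Rn$ is the set obtained by appending to each $\sigma\in R$ of length $m$ the entry $m+1$. *)

(* Defs.v *)
From HB Require Import structures.
From mathcomp Require Import all_boot all_algebra.
From mathcomp Require Import boolp.
Set Implicit Arguments. Unset Strict Implicit. Unset Printing Implicit Defensive.
Import GRing.Theory.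

Definition is_perm (s : seq nat) : Prop := perm_eq s (iota 1 (size s)).

Definition pattern_in (p s : seq nat) : Prop :=
  exists2 t : seq nat, subseq t s &
    (size t = size p /\
     forall i j, i < size p -> j < size p ->
       (nth 0 t i < nth 0 t j) = (nth 0 p i < nth 0 p j)).

Definition avoids_set (S : seq nat -> Prop) (s : seq nat) : Prop :=
  forall p, S p -> ~ pattern_in p s.

Definition av_count (S : seq nat -> Prop) (n : nat) : nat :=
  count (fun s => `[< avoids_set S s >]) (permutations (iota 1 n)).

Definition pats_1243_2143 (R : seq nat -> Prop) (p : seq nat) : Prop :=
  p = [:: 1; 2; 4; 3] \/ p = [:: 2; 1; 4; 3] \/ R p.

(* Rn : append m+1 to every sigma in R of length m. *)
Definition appendMax (R : seq nat -> Prop) (t : seq nat) : Prop :=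
  exists2 s, R s & t = rcons s (size s).+1.

(* Formal power series over K as coefficient functions. *)
Local Open Scope ring_scope.
Definition scst (K : fieldType) (c : K) : nat -> K :=
  fun n => if n is 0 then c else 0.
Definition sX (K : fieldType) : nat -> K := fun n => if n == 1%N then 1 else 0.
Definition sadd (K : fieldType) (a b : nat -> K) : nat -> K := fun n => a n + b n.
Definition ssub (K : fieldType) (a b : nat -> K) : nat -> K := fun n => a n - b n.
Definition smul (K : fieldType) (a b : nat -> K) : nat -> K :=
  fun n => \sum_(i < n.+1) a i * b (n - i)%N.
Definition sgf (K : fieldType) (a : nat -> nat) : nat -> K := fun n => (a n)%:R.

(* Main.v *)
Require Import Defs.
From mathcomp Require Import all_boot all_algebra.
From mathcomp Require Import boolp.
From mathcomp Require Import zify ring.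
Set Implicit Arguments. Unset Strict Implicit. Unset Printing Implicit Defensive.

Lemma subseq_cat_split (t s1 s2 : seq nat) : subseq t (s1 ++ s2) ->
  exists t1 t2, [/\ t = t1 ++ t2, subseq t1 s1 & subseq t2 s2].
Proof.
elim: s1 t => [|x s1 IH] t /=.
  by move=> h; exists [::], t; split; rewrite ?sub0seq.
case: t => [|z t] /=.
  by move=> _; exists [::], [::]; split; rewrite ?sub0seq.
case: eqP => [-> | _] h.
  have [t1 [t2 [-> h1 h2]]] := IH _ h.
  by exists (x :: t1), t2; rewrite /= eqxx h1 h2.
have [t1 [t2 [e h1 h2]]] := IH _ h.
exists t1, t2; split => //; apply: subseq_trans h1 (subseq_cons _ _).
Qed.

Lemma subseq_mapE (f : nat -> nat) (t s : seq nat) : subseq t (map f s) ->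
  exists2 t', t = map f t' & subseq t' s.
Proof.
elim: s t => [|y s IH] t /=.
  by move/eqP => ->; exists [::].
case: t => [|z t] /=.
  by move=> _; exists [::]; rewrite ?sub0seq.
case: eqP => [-> | _] h.
  have [t' -> h'] := IH _ h.
  by exists (y :: t'); rewrite //= eqxx.
have [t' e h'] := IH _ h.
exists t' => //; apply: subseq_trans h' (subseq_cons _ _).
Qed.

Lemma subseq_cons_neq (x y : nat) (t s : seq nat) : x != y ->
  subseq (x :: t) (y :: s) -> subseq (x :: t) s.
Proof. by move=> ne; rewrite /= (negbTE ne). Qed.

Lemma subseq_rcons_split (t s : seq nat) x : subseq (rcons t x) s ->
  exists2 q, q < size s & nth 0 s q = x /\ subseq t (take q s).
Proof.
elim: s t => [|y s IH] t /=.
  by case: t.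
case: t => [|z t] /=.
  case: eqP => [-> | _] h.
    by exists 0.
  have [q h1 [h2 h3]] := IH [::] h.
  by exists q.+1.
case: eqP => [-> | _] h.
  have [q h1 [h2 h3]] := IH _ h.
  by exists q.+1 => //=; rewrite eqxx.
have [q h1 [h2 h3]] := IH (z :: t) h.
exists q.+1 => //=; split => //.
exact: subseq_trans h3 (subseq_cons _ _).
Qed.

Lemma subseq_rcons_nth (t s : seq nat) q : q < size s -> subseq t (take q s) ->
  subseq (rcons t (nth 0 s q)) s.
Proof.
move=> hq ht.
have e : s = take q s ++ nth 0 s q :: drop q.+1 s by rewrite -drop_nth // cat_take_drop.
rewrite {2}e -cats1.
apply: cat_subseq => //.
by rewrite sub1seq mem_head.
Qed.

Definition Q (s : seq nat) := exists a b c d,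
  [/\ subseq [:: a; b; c; d] s, d < c, a < d & b < d].
Definition okR (R : seq nat -> Prop) s := forall p, R p -> ~ pattern_in p s.
Definition OkE (R : seq nat -> Prop) s := forall q, q < size s ->
  okR R [seq x <- take q s | x < nth 0 s q].
Definition Aav R s := ~ Q s /\ okR R s.
Definition Bav R s := ~ Q s /\ OkE R s.

Lemma pat1243 s : pattern_in [:: 1; 2; 4; 3] s <->
  exists a b c d, [/\ subseq [:: a; b; c; d] s, a < b, b < d & d < c].
Proof.
split.
  move=> [t sub [sz H]].
  case: t sub sz H => [|a [|b [|c [|d [|? ?]]]]] //= sub _ H.
  exists a, b, c, d; split => //.
  - by rewrite (H 0 1 isT isT).
  - by rewrite (H 1 3 isT isT).
  - by rewrite (H 3 2 isT isT).
move=> [a [b [c [d [sub h1 h2 h3]]]]].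
exists [:: a; b; c; d] => //; split => // i j.
by case: i => [|[|[|[|i]]]]; case: j => [|[|[|[|j]]]] /= => *; lia.
Qed.

Lemma pat2143 s : pattern_in [:: 2; 1; 4; 3] s <->
  exists a b c d, [/\ subseq [:: a; b; c; d] s, b < a, a < d & d < c].
Proof.
split.
  move=> [t sub [sz H]].
  case: t sub sz H => [|a [|b [|c [|d [|? ?]]]]] //= sub _ H.
  exists a, b, c, d; split => //.
  - by rewrite (H 1 0 isT isT).
  - by rewrite (H 0 3 isT isT).
  - by rewrite (H 3 2 isT isT).
move=> [a [b [c [d [sub h1 h2 h3]]]]].
exists [:: a; b; c; d] => //; split => // i j.
by case: i => [|[|[|[|i]]]]; case: j => [|[|[|[|j]]]] /= => *; lia.
Qed.

Lemma Q_pat s : uniq s ->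
  (Q s <-> pattern_in [:: 1; 2; 4; 3] s \/ pattern_in [:: 2; 1; 4; 3] s).
Proof.
move=> us; rewrite pat1243 pat2143; split.
  move=> [a [b [c [d [sub h1 h2 h3]]]]].
  have := subseq_uniq sub us; rewrite /= !inE => /andP[/norP[ab _] _].
  case: (ltngtP a b) => hab.
  - by left; exists a, b, c, d.
  - by right; exists a, b, c, d.
  - by rewrite hab eqxx in ab.
case=> [[a [b [c [d [sub h1 h2 h3]]]]]|[a [b [c [d [sub h1 h2 h3]]]]]];
  exists a, b, c, d; split => //; lia.
Qed.

Lemma is_perm_le (s : seq nat) x : is_perm s -> x \in s -> 0 < x <= size s.
Proof. by move=> /perm_mem -> ; rewrite mem_iota add1n ltnS. Qed.

Lemma patE (sg s : seq nat) : is_perm sg ->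
  (pattern_in (rcons sg (size sg).+1) s <->
   exists2 q, q < size s & pattern_in sg [seq x <- take q s | x < nth 0 s q]).
Proof.
move=> psg; split.
  move=> [t sub [sz H]].
  case/lastP: t sub sz H => [|t' e]; first by rewrite size_rcons.
  rewrite !size_rcons => sub [sz] H.
  have [q hq [hn ht]] := subseq_rcons_split sub.
  exists q => //; exists t'; last split => //.
    rewrite subseq_filter ht andbT hn; apply/allP => x /(nthP 0) [i hi <-].
    have hi' : i < size sg by rewrite -sz.
    have := H i (size sg) (leqW hi') (ltnSn _).
    rewrite !nth_rcons sz hi' ltnn eqxx => ->.
    by have /is_perm_le := mem_nth 0 hi'; move/(_ psg) => /andP[_ h]; rewrite ltnS.
  move=> i j hi hj.
  have := H i j (leqW hi) (leqW hj).
  by rewrite !nth_rcons sz hi hj.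
move=> [q hq [t' sub [sz H]]].
move: sub; rewrite subseq_filter => /andP[/allP ha ht].
exists (rcons t' (nth 0 s q)); first exact: subseq_rcons_nth.
rewrite !size_rcons sz; split => // i j hi hj.
have hle : forall k, k < size sg -> nth 0 sg k < (size sg).+1.
  by move=> k hk; have /is_perm_le := mem_nth 0 hk; move/(_ psg) => /andP[_ h]; rewrite ltnS.
have hlt : forall k, k < size sg -> nth 0 t' k < nth 0 s q.
  by move=> k hk; apply: ha; apply: mem_nth; rewrite sz.
rewrite ltnS leq_eqVlt in hi. rewrite ltnS leq_eqVlt in hj.
case/orP: hi => [/eqP -> | hi]; case/orP: hj => [/eqP -> | hj];
  rewrite !nth_rcons sz ?ltnn ?eqxx.
- by rewrite ?ltnn.
- rewrite hj; have := hlt j hj; have := hle j hj. lia.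
- rewrite hi; have := hlt i hi; have := hle i hi. lia.
- by rewrite hi hj; apply: H.
Qed.

Lemma L1 (R : seq nat -> Prop) s : uniq s ->
  (avoids_set (pats_1243_2143 R) s <-> Aav R s).
Proof.
move=> us; split.
  move=> av; split.
    by move/(Q_pat us) => [h|h]; [apply: (av _ (or_introl erefl)) | apply: (av _ (or_intror (or_introl erefl)))].
  by move=> p Rp; apply: av; right; right.
move=> [nQ oR] p [->|[->|Rp]] h; first (by apply: nQ; apply/(Q_pat us); left).
  by apply: nQ; apply/(Q_pat us); right.
exact: oR Rp h.
Qed.

Lemma L2 (R : seq nat -> Prop) s : uniq s -> (forall p, R p -> is_perm p) ->
  (avoids_set (pats_1243_2143 (appendMax R)) s <-> Bav R s).
Proof.
move=> us hR; split.
  move=> av; split.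
    by move/(Q_pat us) => [h|h]; [apply: (av _ (or_introl erefl)) | apply: (av _ (or_intror (or_introl erefl)))].
  move=> q hq p Rp hp; apply: (av (rcons p (size p).+1)).
    by right; right; exists p.
  by apply/(patE _ (hR _ Rp)); exists q.
move=> [nQ oE] p [->|[->|[sg Rsg ->]]] h; first (by apply: nQ; apply/(Q_pat us); left).
  by apply: nQ; apply/(Q_pat us); right.
have [q hq hp] := (patE s (hR _ Rsg)).1 h.
exact: oE q hq sg Rsg hp.
Qed.

Lemma pattern_in_sub p x y : subseq x y -> pattern_in p x -> pattern_in p y.
Proof. by move=> sxy [t st h]; exists t => //; apply: subseq_trans st sxy. Qed.

Lemma okR_sub R x y : subseq x y -> okR R y -> okR R x.
Proof. by move=> sxy oy p Rp /(pattern_in_sub sxy); apply: oy. Qed.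

Lemma okR_nil (R : seq nat -> Prop) : ~ R [::] -> okR R [::].
Proof.
move=> nR p Rp [t st [sz _]].
move: st; rewrite subseq0 => /eqP et; rewrite et in sz.
by case: p Rp sz.
Qed.

Section MapInv.
Variable f : nat -> nat.
Hypothesis hf : forall x y, (f x < f y) = (x < y).

Lemma finj : injective f.
Proof.
move=> x y e; case: (ltngtP x y) => // h; [move: (hf x y) | move: (hf y x)];
  by rewrite h e ltnn.
Qed.

Lemma pat_map p s : pattern_in p (map f s) <-> pattern_in p s.
Proof.
split.
  move=> [t st [sz H]].
  have [t' et st'] := subseq_mapE st.
  exists t' => //; split; first by rewrite -sz et size_map.
  move=> i j hi hj; rewrite -H // et.
  have hs : size t' = size p by rewrite -sz et size_map.
  by rewrite !(nth_map 0) ?hs // hf.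
move=> [t st [sz H]].
exists (map f t); first exact: map_subseq.
split; first by rewrite size_map.
by move=> i j hi hj; rewrite !(nth_map 0) ?sz // hf H.
Qed.

Lemma Q_map s : Q (map f s) <-> Q s.
Proof.
split.
  move=> [a [b [c [d [st h1 h2 h3]]]]].
  have [t' et st'] := subseq_mapE st.
  case: t' et st' => [|a' [|b' [|c' [|d' [|? ?]]]]] //= [ea eb ec ed] st'.
  by exists a', b', c', d'; rewrite -(hf d' c') -(hf a' d') -(hf b' d') -ea -eb -ec -ed.
move=> [a [b [c [d [st h1 h2 h3]]]]].
exists (f a), (f b), (f c), (f d); rewrite !hf; split => //.
exact: (map_subseq f st).
Qed.

Lemma okR_map R s : okR R (map f s) <-> okR R s.
Proof.
by split => h p Rp hp; apply: (h p Rp); apply/pat_map.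
Qed.

Lemma filter_map_lt (t : seq nat) e :
  [seq x <- map f t | x < f e] = map f [seq x <- t | x < e].
Proof. by rewrite filter_map; congr map; apply: eq_filter => x /=; rewrite hf. Qed.

Lemma OkE_map R s : OkE R (map f s) <-> OkE R s.
Proof.
split => h q hq.
  have := h q; rewrite size_map (nth_map 0) // -map_take filter_map_lt => /(_ hq).
  by move/okR_map.
rewrite size_map in hq.
rewrite (nth_map 0) // -map_take filter_map_lt; apply/okR_map; exact: h.
Qed.

Lemma Aav_map R s : Aav R (map f s) <-> Aav R s.
Proof.
split=> [[h1 h2]|[h1 h2]]; split; try by apply/okR_map.
- by move=> q; apply: h1; apply/Q_map.
- by move=> q; apply: h1; apply/Q_map.
Qed.

Lemma Bav_map R s : Bav R (map f s) <-> Bav R s.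
Proof.
split=> [[h1 h2]|[h1 h2]]; split; try by apply/OkE_map.
- by move=> q; apply: h1; apply/Q_map.
- by move=> q; apply: h1; apply/Q_map.
Qed.
End MapInv.

Lemma Q_sub x y : subseq x y -> Q x -> Q y.
Proof.
by move=> sxy [a [b [c [d [st h1 h2 h3]]]]]; exists a, b, c, d; split => //; apply: subseq_trans st sxy.
Qed.

Lemma sub_single (s : seq nat) m : uniq s -> (forall x, x \in s -> x = m) -> subseq s [:: m].
Proof.
case: s => [|x [|y s]] //= us h.
  by rewrite (h x (mem_head _ _)) eqxx.
move: us; rewrite (h x (mem_head _ _)) (h y); first by rewrite inE eqxx.
by rewrite !inE eqxx !orbT.
Qed.

Lemma filter1_sub (p : pred nat) x s : x \in s -> subseq [seq y <- [:: x] | p y] [seq y <- s | p y].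
Proof.
move=> xs /=; case: ifP => px; last exact: sub0seq.
by rewrite sub1seq mem_filter px.
Qed.

Lemma two_sub (s : seq nat) a b : a \in s -> b \in s -> a != b ->
  subseq [:: a; b] s \/ subseq [:: b; a] s.
Proof.
elim: s => [|z s IH] //.
rewrite !inE => ha hb nab.
case: (eqVneq a z) => [eaz | naz].
  subst z; left; rewrite /= eqxx sub1seq.
  by move: hb; rewrite eq_sym (negbTE nab).
case: (eqVneq b z) => [ebz | nbz].
  subst z; right; rewrite /= eqxx sub1seq.
  by move: ha; rewrite (negbTE nab).
rewrite (negbTE naz) /= in ha; rewrite (negbTE nbz) /= in hb.
by case: (IH ha hb nab) => h; [left|right]; apply: subseq_trans h (subseq_cons _ _).
Qed.

Lemma C_of (al be : seq nat) N m : uniq (al ++ N :: be) -> ~ Q (al ++ N :: be) ->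
  m \in al -> (forall x, x \in al -> m <= x) -> (forall y, y \in be -> y < N) ->
  forall x, x \in al -> x != m -> forall y, y \in be -> y < x.
Proof.
move=> us nQ mal hmin hN x xal xm y yb.
rewrite ltnNge; apply/negP => hxy.
have nxy : x != y.
  apply/eqP => exy; move: us; rewrite cat_uniq => /and3P[_ /hasP hh _].
  by apply: hh; exists y; rewrite ?inE ?yb ?orbT // -exy.
have hmx : m < x by move: (hmin x xal); rewrite leq_eqVlt eq_sym (negbTE xm).
have xy : x < y by rewrite ltn_neqAle nxy hxy.
have sNy : subseq [:: N; y] (N :: be) by rewrite /= eqxx sub1seq.
have nmx : m != x by rewrite eq_sym.
case: (two_sub mal xal nmx) => h.
  apply: nQ; exists m, x, N, y; split => //.
  - exact: (cat_subseq h sNy).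
  - exact: hN.
  - exact: ltn_trans hmx xy.
apply: nQ; exists x, m, N, y; split => //.
- exact: (cat_subseq h sNy).
- exact: hN.
- exact: ltn_trans hmx xy.
Qed.

Lemma cons_sub (p : pred nat) m al t : m \in al ->
  subseq [seq x <- m :: t | p x] ([seq x <- al | p x] ++ [seq x <- t | p x]).
Proof. by move=> ma; rewrite -cat1s filter_cat; apply: cat_subseq => //; exact: filter1_sub. Qed.

Section Dec.
Variables (R : seq nat -> Prop) (al be : seq nat) (N m : nat).
Hypotheses (us : uniq (al ++ N :: be)) (mal : m \in al)
 (hmin : forall x, x \in al -> x != m -> m < x)
 (hC : forall x, x \in al -> x != m -> forall y, y \in be -> y < x)
 (hN : forall x, x \in al ++ be -> x < N).

Let haN x : x \in al -> x < N.
Proof. by move=> h; apply: hN; rewrite mem_cat h. Qed.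
Let hbN x : x \in be -> x < N.
Proof. by move=> h; apply: hN; rewrite mem_cat h orbT. Qed.
Let H2 x y : x \in al -> x != m -> y \in be -> x < y -> False.
Proof. by move=> xa xm yb xy; have := hC xa xm yb; lia. Qed.
Let ua : uniq al.
Proof. by move: us; rewrite cat_uniq => /and3P[]. Qed.
Let leN x : x \in N :: be -> x <= N.
Proof. by rewrite inE => /orP[/eqP -> //|/hbN /ltnW]. Qed.
Let inbe x : x \in N :: be -> x < N -> x \in be.
Proof. by rewrite inE => /orP[/eqP -> |//]; rewrite ltnn. Qed.
Let subbe x t : subseq (x :: t) (N :: be) -> x < N -> subseq (x :: t) be.
Proof. by move=> h hx; apply: subseq_cons_neq h; rewrite neq_ltn hx. Qed.

Lemma D_Q : ~ Q (al ++ N :: be) <-> ~ Q al /\ ~ Q (m :: be).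
Proof.
split.
  move=> nQ; split => h; apply: nQ; apply: Q_sub h.
    exact: prefix_subseq.
  by rewrite -cat1s; apply: cat_subseq; [rewrite sub1seq | apply: subseq_cons].
move=> [nQa nQm] [a [b [c [d [st h1 h2 h3]]]]].
have [t1 [t2 [e s1 s2]]] := subseq_cat_split st.
case: t1 e s1 => [|a1 [|b1 [|c1 [|d1 [|x l]]]]] /= e s1.
- subst t2.
  have hc : c <= N by apply: leN; apply: (mem_subseq s2); rewrite !inE eqxx !orbT.
  apply: nQm; exists a, b, c, d; split => //.
  apply: subseq_trans (subbe s2 _) (subseq_cons _ _); lia.
- case: e => ea et; subst a1 t2.
  have hc : c <= N by apply: leN; apply: (mem_subseq s2); rewrite !inE eqxx !orbT.
  have s3 := subbe s2 (ltn_trans h3 (leq_trans h1 hc)).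
  have db : d \in be by apply: (mem_subseq s3); rewrite !inE eqxx !orbT.
  have aal : a \in al by rewrite -sub1seq.
  case: (eqVneq a m) => [eam|nam]; last exact: H2 aal nam db h2.
  by apply: nQm; exists a, b, c, d; split => //; rewrite /= eam eqxx.
- case: e => ea eb et; subst a1 b1 t2.
  have aal : a \in al by apply: (mem_subseq s1); rewrite inE eqxx.
  have bal : b \in al by apply: (mem_subseq s1); rewrite !inE eqxx orbT.
  have hc : c <= N by apply: leN; apply: (mem_subseq s2); rewrite !inE eqxx.
  have db : d \in be by apply: inbe; [apply: (mem_subseq s2); rewrite !inE eqxx orbT | lia].
  have nab : a != b by have := subseq_uniq s1 ua; rewrite /= inE andbT.
  case: (eqVneq a m) => [eam|nam]; last exact: H2 aal nam db h2.
  by apply: (H2 bal _ db h3); rewrite -eam eq_sym.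
- case: e => ea eb ec et; subst a1 b1 c1 t2.
  have aal : a \in al by apply: (mem_subseq s1); rewrite inE eqxx.
  have bal : b \in al by apply: (mem_subseq s1); rewrite !inE eqxx orbT.
  have cal : c \in al by apply: (mem_subseq s1); rewrite !inE eqxx !orbT.
  have db : d \in be by apply: inbe; [apply: (mem_subseq s2); rewrite !inE eqxx | have := haN cal; lia].
  have nab : a != b by have := subseq_uniq s1 ua; rewrite /= !inE => /andP[/norP[]].
  case: (eqVneq a m) => [eam|nam]; last exact: H2 aal nam db h2.
  by apply: (H2 bal _ db h3); rewrite -eam eq_sym.
- case: e => ea eb ec ed et; subst a1 b1 c1 d1 t2.
  by apply: nQa; exists a, b, c, d.
- by move/(congr1 size): e => /=; rewrite size_cat /=; lia.
Qed.

Lemma fil_m e : e \in be -> subseq [seq x <- al | x < e] [seq x <- [:: m] | x < e].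
Proof.
move=> eb; rewrite subseq_filter filter_all /=.
apply: sub_single; first exact: filter_uniq.
move=> x; rewrite mem_filter => /andP[xe xa].
by apply/eqP; apply/negP => /negP xm; have := hC xa xm eb; lia.
Qed.

Lemma D_OkE : OkE R (al ++ N :: be) <-> okR R al /\ OkE R (m :: be).
Proof.
have sz : size (al ++ N :: be) = size al + (size be).+1 by rewrite size_cat.
split.
  move=> h.
  have oa : okR R al.
    have := h (size al); rewrite sz nth_cat ltnn subnn take_cat ltnn subnn cats0 /=.
    have -> : [seq x <- al | x < N] = al by apply/all_filterP/allP => x /haN.
    by apply; rewrite -addn1 leq_add2l.
  split => // -[|q] hq.
    by apply: okR_sub oa; apply: sub0seq.
  have hq' : q < size be by [].
  have := h (size al + q.+1); rewrite sz ltn_add2l => /(_ hq).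
  rewrite nth_cat take_cat ltnNge leq_addr /= addKn => hh.
  apply: okR_sub hh.
  rewrite (_ : nth 0 (N :: be) q.+1 = nth 0 be q) //.
  rewrite (_ : take q.+1 (N :: be) = N :: take q be) //.
  rewrite filter_cat /=.
  have -> : (N < nth 0 be q) = false by apply/negbTE; rewrite -leqNgt; apply/ltnW/hbN/mem_nth.
  exact: cons_sub mal.
move=> [oa om] q; rewrite sz => hq.
rewrite nth_cat take_cat.
case: (ltngtP q (size al)) => hq'.
- apply: okR_sub oa; apply: subseq_trans (filter_subseq _ _) (take_subseq _ _).
- have [q' eq'] : exists q', q = size al + q'.+1 by exists (q - size al).-1; lia.
  subst q; rewrite addKn.
  have hq2 : q' < size be by move: hq; rewrite ltn_add2l.
  have := om q'.+1 hq2 => om'.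
  apply: okR_sub om'.
  rewrite (_ : nth 0 (N :: be) q'.+1 = nth 0 be q') //.
  rewrite (_ : take q'.+1 (N :: be) = N :: take q' be) //.
  rewrite filter_cat /=.
  have -> : (N < nth 0 be q') = false by apply/negbTE; rewrite -leqNgt; apply/ltnW/hbN/mem_nth.
  have := fil_m (mem_nth 0 hq2); rewrite /=.
  case: ifP => _ fm.
    by rewrite -cat1s; apply: cat_subseq.
  by move: fm; rewrite subseq0 => /eqP ->.
- subst q; rewrite subnn /= cats0; apply: okR_sub oa; exact: filter_subseq.
Qed.

Lemma D_Bav : Bav R (al ++ N :: be) <-> Aav R al /\ Bav R (m :: be).
Proof.
split.
  move=> [nQ oE]; have [h1 h2] := D_Q.1 nQ; have [h3 h4] := D_OkE.1 oE; by split; split.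
by move=> [[h1 h3] [h2 h4]]; split; [apply/D_Q | apply/D_OkE].
Qed.
End Dec.

Lemma Bav_cons (R : seq nat -> Prop) N be : ~ R [::] -> (forall y, y \in be -> y < N) ->
  Bav R (N :: be) <-> Bav R be.
Proof.
move=> nR hN; split.
  move=> [nQ oE]; split.
    move=> [a [b [c [d [st h1 h2 h3]]]]]; apply: nQ; exists a, b, c, d; split => //.
    apply: subseq_trans st (subseq_cons _ _).
  move=> q hq; have := oE q.+1 hq; rewrite /=.
  by have -> : (N < nth 0 be q) = false by apply/negbTE; rewrite -leqNgt; apply/ltnW/hN/mem_nth.
move=> [nQ oE]; split.
  move=> [a [b [c [d [st h1 h2 h3]]]]]; apply: nQ; exists a, b, c, d; split => //.
  have hc : c <= N.
    have := mem_subseq st; move/(_ c); rewrite !inE eqxx !orbT => /(_ isT).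
    by case/orP => [/eqP -> // | /hN /ltnW].
  by apply: subseq_cons_neq st; rewrite neq_ltn; apply/orP; left; lia.
move=> [|q] hq /=; first exact: okR_nil.
have -> : (N < nth 0 be q) = false by apply/negbTE; rewrite -leqNgt; apply/ltnW/hN/mem_nth.
exact: oE.
Qed.

Definition acount R n := count (fun s => `[< Aav R s >]) (permutations (iota 1 n)).
Definition bcount R n := count (fun s => `[< Bav R s >]) (permutations (iota 1 n)).

Lemma perm_iotaP (s : seq nat) n : perm_eq s (iota 1 n) ->
  [/\ uniq s, size s = n & forall x, x \in s = (0 < x <= n)].
Proof.
move=> p; split.
- by rewrite (perm_uniq p) iota_uniq.
- by rewrite (perm_size p) size_iota.
- by move=> x; rewrite (perm_mem p) mem_iota add1n ltnS.
Qed.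

Lemma iota_perm (s : seq nat) n : uniq s -> size s = n ->
  (forall x, x \in s -> 0 < x <= n) -> perm_eq s (iota 1 n).
Proof.
move=> us sz h.
have hsub : {subset s <= iota 1 n} by move=> x /h; rewrite mem_iota add1n ltnS.
have hsz : size (iota 1 n) <= size s by rewrite size_iota sz.
have [_ e] := uniq_min_size us hsub hsz.
by apply: uniq_perm => //; apply: iota_uniq.
Qed.

Lemma av_countA R n : av_count (pats_1243_2143 R) n = acount R n.
Proof.
apply: eq_in_count => s; rewrite mem_permutations => /perm_iotaP[us _ _].
exact/asbool_equiv_eq/L1.
Qed.

Lemma av_countB R n : (forall p, R p -> is_perm p) ->
  av_count (pats_1243_2143 (appendMax R)) n = bcount R n.
Proof.
move=> hR; apply: eq_in_count => s; rewrite mem_permutations => /perm_iotaP[us _ _].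
exact/asbool_equiv_eq/L2.
Qed.

Lemma count_split (P : pred (seq nat)) L N : (forall x, x \in L -> index N x < N) ->
  count P L = \sum_(j < N) count (fun x => P x && (index N x == j)) L.
Proof.
elim: L => [|x L IH] h /=.
  by rewrite big1.
rewrite big_split /= -IH; last by move=> y yL; apply: h; rewrite inE yL orbT.
congr (_ + _).
have hx : index N x < N by apply: h; rewrite mem_head.
rewrite (bigD1 (Ordinal hx)) //= eqxx andbT big1 ?addn0 // => j hj.
suff -> : (index N x == j) = false by rewrite andbF.
by apply/negbTE; apply: contra hj => /eqP e; apply/eqP/val_inj; rewrite /= e.
Qed.

Lemma term0 R n : ~ R [::] ->
  count (fun x => `[< Bav R x >] && (index n.+1 x == 0)) (permutations (iota 1 n.+1))
  = bcount R n.
Proof.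
move=> nR; rewrite -size_filter /bcount -size_filter -[RHS](size_map (cons n.+1)).
apply: perm_size; apply: uniq_perm.
- exact: filter_uniq (permutations_uniq _).
- by rewrite map_inj_uniq; [exact: filter_uniq (permutations_uniq _) | move=> ? ? []].
move=> x; apply/idP/idP.
  rewrite mem_filter mem_permutations => /andP[/andP[/asboolP hB /eqP hi] /perm_iotaP [ux sx vx]].
  case: x hi hB ux sx vx => [|y be] //= hi hB ux sx vx.
  case: eqP hi => // ey _; subst y.
  have hN : forall y, y \in be -> y < n.+1.
    move=> y yb; have := vx y; rewrite inE yb orbT => /esym/andP[_].
    rewrite leq_eqVlt => /orP[/eqP ey|//]; subst y.
    by move: ux => /andP[/negP].
  apply/mapP; exists be => //.
  rewrite mem_filter mem_permutations; apply/andP; split.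
    by apply/asboolP; apply/(Bav_cons nR hN).
  apply: iota_perm.
  - by case/andP: ux.
  - by case: sx.
  - by move=> y yb; have := hN y yb; have := vx y; rewrite inE yb orbT => /esym /andP[-> _].
move/mapP => [be]; rewrite mem_filter mem_permutations => /andP[/asboolP hB /perm_iotaP [ub sb vb]] ->.
have hN : forall y, y \in be -> y < n.+1 by move=> y; rewrite vb => /andP[_].
rewrite mem_filter mem_permutations /= eqxx andbT; apply/andP; split.
  by apply/asboolP; apply/(Bav_cons nR hN).
apply: (@iota_perm _ n.+1) => /=.
- by rewrite ub andbT; apply/negP => /hN; rewrite ltnn.
- by rewrite sb.
- move=> y; rewrite inE => /orP[/eqP -> | yb]; first by rewrite /= leqnn.
  by have := vb y; rewrite yb => /esym /andP[-> /leqW].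
Qed.

Definition hmap (g k v : nat) := if v == 0 then 0 else if v == 1 then g else v.-1 + k.
Definition hinv (g k w : nat) := if w == g then 1 else (w - k).+1.
Definition Phi (N k : nat) (a c : seq nat) := map (hmap (head 0 c) k) a ++ N :: behead c.

Lemma hmap_mono g k : 0 < g <= k -> forall x y, (hmap g k x < hmap g k y) = (x < y).
Proof. by move=> /andP[g0 gk] [|[|x]] [|[|y]]; rewrite /hmap /=; lia. Qed.

Lemma exists_min (s : seq nat) : s != [::] -> exists2 m, m \in s & forall x, x \in s -> m <= x.
Proof.
elim: s => [|y s IH] // _.
case: (eqVneq s [::]) => [->|ns].
  by exists y; rewrite ?mem_head // => x; rewrite inE => /eqP ->.
have [m ms hm] := IH ns.
exists (minn y m).
  by rewrite /minn; case: ifP; rewrite !inE ?eqxx ?ms ?orbT.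
move=> x; rewrite inE => /orP[/eqP ->|xs]; first exact: geq_minl.
by apply: leq_trans (geq_minr _ _) (hm x xs).
Qed.

Lemma phi_ok R n i a c : i < n -> perm_eq a (iota 1 i.+1) -> perm_eq c (iota 1 (n - i)) ->
  Aav R a -> Bav R c ->
  [/\ perm_eq (Phi n.+1 (n - i) a c) (iota 1 n.+1), Bav R (Phi n.+1 (n - i) a c)
    & index n.+1 (Phi n.+1 (n - i) a c) = i.+1].
Proof.
move=> hin /perm_iotaP[ua sa va] /perm_iotaP[uc sc vc] hA hB.
set k := n - i.
have k0 : 0 < k by rewrite /k subn_gt0.
case: c uc sc vc hB => [|g c'] uc sc vc hB; first by move: k0; rewrite /k -sc.
rewrite /Phi [head _ _]/= [behead _]/=.
have hg : 0 < g <= k by rewrite -vc mem_head.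
have vc' : forall y, y \in c' -> 0 < y <= k by move=> y yc; rewrite -vc inE yc orbT.
have gc' : g \notin c' by case/andP: uc.
set h := hmap g k.
have hm := hmap_mono hg.
have F2 : g \in map h a by apply/mapP; exists 1; rewrite ?va //.
have F1 : forall x, x \in map h a -> x != g -> k < x < n.+1.
  move=> x /mapP[v]; rewrite va => /andP[v0 vj] ->.
  case: v v0 vj => [|[|v]] //=; first by rewrite /h /hmap /= eqxx.
  move=> _ vj _; rewrite /h /hmap /= /k; lia.
have F3 : forall x, x \in map h a -> 0 < x < n.+1.
  move=> x xa; case: (eqVneq x g) => [->|xg]; first by move: hg; rewrite /k; lia.
  by have := F1 x xa xg; lia.
have us : uniq (map h a ++ n.+1 :: c').
  rewrite cat_uniq map_inj_uniq ?ua; last exact: finj hm.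
  apply/and3P; split => //.
    apply/hasPn => y; rewrite inE => /orP[/eqP ->|yc]; first by apply/negP => /F3; rewrite ltnn andbF.
    apply/negP => ya; case: (eqVneq y g) => [eyg|nyg].
      by rewrite -eyg yc in gc'.
    by have := F1 y ya nyg; have := vc' y yc; lia.
  rewrite cons_uniq; apply/andP; split; last by case/andP: uc.
  by apply/negP => /vc'; rewrite /k; lia.
split.
- apply: iota_perm => //.
    by rewrite size_cat size_map /= sa; move: sc => /= sc; lia.
  move=> x; rewrite mem_cat inE => /orP[/F3|/orP[/eqP ->|/vc']]; rewrite /k; lia.
- have hmin : forall x, x \in map h a -> x != g -> g < x.
    by move=> x xa xg; have := F1 x xa xg; move: hg; lia.
  have hC : forall x, x \in map h a -> x != g -> forall y, y \in c' -> y < x.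
    by move=> x xa xg y yc; have := F1 x xa xg; have := vc' y yc; lia.
  have hN : forall x, x \in map h a ++ c' -> x < n.+1.
    by move=> x; rewrite mem_cat => /orP[/F3 /andP[]|/vc']; rewrite /k; lia.
  apply/(D_Bav R us F2 hC hN); split => //.
  exact/(Aav_map hm).
- rewrite index_cat; case: ifP => [/F3|_]; first by rewrite ltnn andbF.
  by rewrite size_map sa /= eqxx addn0.
Qed.

Lemma surj R n i (x : seq nat) : i < n -> perm_eq x (iota 1 n.+1) -> Bav R x ->
  index n.+1 x = i.+1 ->
  exists a c, [/\ perm_eq a (iota 1 i.+1), Aav R a, perm_eq c (iota 1 (n - i)), Bav R c
     & x = Phi n.+1 (n - i) a c].
Proof.
move=> hin /perm_iotaP[ux sx vx] hB hidx.
set k := n - i.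
have Nx : n.+1 \in x by rewrite vx leqnn.
have hj : i.+1 < size x by rewrite sx ltnS.
set al := take i.+1 x; set be := drop i.+2 x.
have ex : x = al ++ n.+1 :: be.
  have hn : nth 0 x i.+1 = n.+1 by rewrite -hidx nth_index.
  by rewrite /al /be -{1}(cat_take_drop i.+1 x) (drop_nth 0 hj) hn.
have sal : size al = i.+1 by rewrite size_take hj.
have sbe : size be = n - i.+1 by rewrite size_drop sx.
have us : uniq (al ++ n.+1 :: be) by rewrite -ex.
have vx' : forall y, y \in al ++ n.+1 :: be -> 0 < y <= n.+1 by move=> y; rewrite -ex vx.
have hN : forall y, y \in al ++ be -> y < n.+1.
  move=> y hy; have : y \in al ++ n.+1 :: be.
    by move: hy; rewrite !mem_cat inE => /orP[->|->]; rewrite ?orbT.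
  move/vx' => /andP[_]; rewrite leq_eqVlt => /orP[/eqP eyN|//].
  move: us; rewrite cat_uniq cons_uniq => /and4P[_ hh nb _].
  move: hy; rewrite mem_cat eyN => /orP[ya|yb]; last by rewrite yb in nb.
  by move/hasPn: hh => /(_ n.+1 (mem_head _ _)); rewrite ya.
have aln : al != [::] by rewrite -size_eq0 sal.
have [m mal mmin] := exists_min aln.
have hbN : forall y, y \in be -> y < n.+1 by move=> y yb; apply: hN; rewrite mem_cat yb orbT.
have haN : forall y, y \in al -> y < n.+1 by move=> y ya; apply: hN; rewrite mem_cat ya.
have nQ : ~ Q (al ++ n.+1 :: be) by rewrite -ex; case: hB.
have hC := C_of us nQ mal mmin hbN.
have hmin : forall y, y \in al -> y != m -> m < y.
  by move=> y ya ym; have := mmin y ya; rewrite leq_eqVlt eq_sym (negbTE ym).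
have hBx : Bav R (al ++ n.+1 :: be) by rewrite -ex.
have [hA hBm] := (D_Bav R us mal hC hN).1 hBx.
have vpos : forall y, y \in al ++ n.+1 :: be -> 0 < y by move=> y /vx' /andP[].
have ub : uniq (m :: be).
  rewrite cons_uniq; move: (us); rewrite cat_uniq cons_uniq => /and4P[_ hh _ ->]; rewrite andbT.
  apply/negP => mb; move/hasPn: hh => /(_ m); rewrite inE mb orbT mal.
  by move/(_ isT).
have szc : size (m :: be) = k by rewrite /= sbe /k; lia.
have V1 : forall y, y \in m :: be -> y <= k.
  move=> y yc.
  have yN : y < n.+1 by move: yc; rewrite inE => /orP[/eqP ->|/hbN //]; apply: haN.
  rewrite -szc -[X in X <= _](size_iota 1 y).
  apply: uniq_leq_size; first exact: iota_uniq.
  move=> v; rewrite mem_iota add1n ltnS => /andP[v0 vy].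
  have : v \in al ++ n.+1 :: be.
    by rewrite -ex vx v0 (leq_trans vy (ltnW yN)).
  rewrite mem_cat inE => /orP[va|/orP[/eqP eN|vb]].
  - case: (eqVneq v m) => [->|vm] //=.
    move: yc; rewrite inE => /orP[/eqP eym|yb].
      by have := hmin v va vm; rewrite -eym; lia.
    by have := hC v va vm y yb; lia.
  - by move: yN; rewrite -eN; lia.
  - by apply/orP; right.
have V2 : forall y, y \in al -> y != m -> k < y.
  move=> y ya ym; rewrite -szc.
  have y0 : 0 < y by apply: vpos; rewrite mem_cat ya.
  suff : size (m :: be) <= size (iota 1 y.-1) by rewrite size_iota; lia.
  apply: uniq_leq_size => // v; rewrite mem_iota add1n => hv.
  have v0 : 0 < v by apply: vpos; move: hv; rewrite !mem_cat !inE => /orP[/eqP ->|->]; rewrite ?mal ?orbT.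
  rewrite v0 /=; move: hv; rewrite inE => /orP[/eqP ->|vb].
    by have := hmin y ya ym; lia.
  by have := hC y ya ym v vb; lia.
have mk : 0 < m <= k by rewrite (V1 m (mem_head _ _)) andbT; apply: vpos; rewrite mem_cat mal.
set a := map (hinv m k) al.
have ha : map (hmap m k) a = al.
  rewrite -map_comp; apply: map_id_in => w wa /=.
  rewrite /hinv; case: eqP => [->|wm]; first by rewrite /hmap.
  have hw := V2 w wa (introN eqP wm); rewrite /hmap /=.
  case: ifP => [/eqP|_]; lia.
exists a, (m :: be); split => //.
- apply: iota_perm.
  + by apply: (@map_uniq _ _ (hmap m k)); rewrite ha; move: (us); rewrite cat_uniq => /and3P[].
  + by rewrite size_map sal.
  + move=> w /mapP[v va ->]; rewrite /hinv; case: eqP => // vm.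
    by have := V2 v va (introN eqP vm); have := haN v va; rewrite /k; lia.
- by apply/(Aav_map (hmap_mono mk)); rewrite ha.
- apply: iota_perm => //.
  move=> y yc; rewrite V1 // andbT; apply: vpos.
  by move: yc; rewrite inE !mem_cat inE => /orP[/eqP ->|->]; rewrite ?mal ?orbT.
- by rewrite /Phi /= ha.
Qed.

Lemma phi_inj n i a1 a2 c1 c2 : i < n -> perm_eq a1 (iota 1 i.+1) -> perm_eq a2 (iota 1 i.+1) ->
  perm_eq c1 (iota 1 (n - i)) -> perm_eq c2 (iota 1 (n - i)) ->
  Phi n.+1 (n - i) a1 c1 = Phi n.+1 (n - i) a2 c2 -> a1 = a2 /\ c1 = c2.
Proof.
move=> hin /perm_iotaP[_ sa1 _] /perm_iotaP[_ sa2 _] /perm_iotaP[uc1 sc1 vc1] /perm_iotaP[uc2 sc2 vc2].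
case: c1 uc1 sc1 vc1 => [|g1 c1'] uc1 sc1 vc1; first by move: sc1 => /= /esym /eqP; rewrite subn_eq0 leqNgt hin.
case: c2 uc2 sc2 vc2 => [|g2 c2'] uc2 sc2 vc2; first by move: sc2 => /= /esym /eqP; rewrite subn_eq0 leqNgt hin.
rewrite /Phi [head _ _]/= [behead _]/= [head _ (g2 :: _)]/= [behead (g2 :: _)]/= => /eqP.
rewrite eqseq_cat ?size_map ?sa1 ?sa2 // => /andP[/eqP e1 /eqP [e2]]; subst c2'.
have eg : g1 = g2.
  have : g1 \in g2 :: c1' by rewrite vc2 -vc1 mem_head.
  rewrite inE => /orP[/eqP //|hg].
  by move: uc1; rewrite cons_uniq hg.
subst g2; split => //.
have hg : 0 < g1 <= n - i by rewrite -vc1 mem_head.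
exact: (inj_map (finj (hmap_mono hg))).
Qed.

Lemma termj R n i : i < n ->
  count (fun x => `[< Bav R x >] && (index n.+1 x == i.+1)) (permutations (iota 1 n.+1))
  = acount R i.+1 * bcount R (n - i).
Proof.
move=> hin; rewrite /acount /bcount -!size_filter -(size_allpairs (Phi n.+1 (n - i))).
apply: perm_size; apply: uniq_perm.
- exact: filter_uniq (permutations_uniq _).
- apply: allpairs_uniq; try exact: filter_uniq (permutations_uniq _).
  move=> [a1 c1] [a2 c2] /allpairsP[[a1' c1'] /= [h1 h2 [-> ->]]] /allpairsP[[a2' c2'] /= [h3 h4 [-> ->]]] /= e.
  move: h1 h2 h3 h4; rewrite !mem_filter !mem_permutations => /andP[_ p1] /andP[_ p2] /andP[_ p3] /andP[_ p4].
  by case: (phi_inj hin p1 p3 p2 p4 e) => -> ->.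
move=> x; apply/idP/idP.
  rewrite mem_filter mem_permutations => /andP[/andP[/asboolP hB /eqP hi] px].
  have [a [c [pa hA pc hBc ex]]] := surj hin px hB hi.
  apply/allpairsP; exists (a, c); split => //=; rewrite mem_filter mem_permutations ?pa ?pc andbT;
    exact/asboolP.
move/allpairsP => [[a c] /= [ha hc ->]].
move: ha hc; rewrite !mem_filter !mem_permutations => /andP[/asboolP hA pa] /andP[/asboolP hBc pc].
have [p hB hi] := phi_ok hin pa pc hA hBc.
apply/andP; split; last exact: p.
by rewrite hi eqxx andbT; apply/asboolP.
Qed.

Lemma brec R n : ~ R [::] ->
  bcount R n.+1 = bcount R n + \sum_(i < n) acount R i.+1 * bcount R (n - i).
Proof.
move=> nR; rewrite {1}/bcount (@count_split _ _ n.+1).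
  rewrite big_ord_recl /= term0 //; congr (_ + _).
  apply: eq_bigr => i _.
  have -> : bump 0 i = i.+1 by rewrite /bump leq0n add1n.
  exact: termj (ltn_ord i).
move=> x; rewrite mem_permutations => /perm_iotaP[_ sx vx].
by rewrite -{2}sx index_mem vx leqnn.
Qed.

Lemma b0 R : bcount R 0 = 1.
Proof.
rewrite /bcount (_ : permutations (iota 1 0) = [:: [::]]) //= addn0; apply/eqP; rewrite eqb1; apply/asboolP; split.
  by move=> [a [b [c [d [st _ _ _]]]]].
by move=> q.
Qed.

Lemma a0 R : acount R 0 = 1 -> ~ R [::].
Proof.
rewrite /acount (_ : permutations (iota 1 0) = [:: [::]]) //= addn0 => /eqP; rewrite eqb1 => /asboolP [_ h] hR.
apply: (h _ hR); exists [::] => //.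
Qed.

Section Alg.
Variable K : fieldType.
Import GRing.Theory.
Local Open Scope ring_scope.

Definition tr (a : nat -> K) n : {poly K} := \poly_(i < n.+1) a i.

Lemma coef_tr (a : nat -> K) n i : (i <= n)%N -> (tr a n)`_i = a i.
Proof. by move=> hi; rewrite coef_poly ltnS hi. Qed.

Lemma smulP (a b : nat -> K) n (p q : {poly K}) :
  (forall i, (i <= n)%N -> p`_i = a i) -> (forall i, (i <= n)%N -> q`_i = b i) ->
  smul a b n = (p * q)`_n.
Proof.
move=> hp hq; rewrite coefM /smul; apply: eq_bigr => i _.
by rewrite hp ?hq ?leq_subr // -ltnS.
Qed.

Lemma smulC (a b : nat -> K) : smul a b = smul b a.
Proof.
apply: funext => n.
rewrite (@smulP a b n (tr a n) (tr b n)); try by move=> i hi; apply: coef_tr.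
rewrite (@smulP b a n (tr b n) (tr a n)); try by move=> i hi; apply: coef_tr.
by rewrite mulrC.
Qed.

Lemma smulA (a b c : nat -> K) : smul (smul a b) c = smul a (smul b c).
Proof.
apply: funext => n.
rewrite (@smulP _ c n (tr a n * tr b n) (tr c n)); last by move=> i hi; apply: coef_tr.
  rewrite (@smulP a _ n (tr a n) (tr b n * tr c n)); first by rewrite mulrA.
    by move=> i hi; apply: coef_tr.
  move=> i hi; rewrite (@smulP b c i (tr b n) (tr c n)) // => k hk;
    apply: coef_tr; exact: leq_trans hk hi.
move=> i hi; rewrite (@smulP a b i (tr a n) (tr b n)) // => k hk;
  apply: coef_tr; exact: leq_trans hk hi.
Qed.

Lemma smul_subl (a b c : nat -> K) : smul (ssub a b) c = ssub (smul a c) (smul b c).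
Proof.
apply: funext => n; rewrite /smul /ssub -sumrB; apply: eq_bigr => i _.
by rewrite mulrBl.
Qed.

Lemma smul1 (e : nat -> K) : smul (scst 1) e = e.
Proof.
apply: funext => n.
rewrite (@smulP _ e n 1 (tr e n)) ?mul1r ?coef_tr //.
  by move=> i _; rewrite coef1; case: i.
by move=> i hi; apply: coef_tr.
Qed.

Lemma smulX (e : nat -> K) n : smul (sX K) e n = if n is m.+1 then e m else 0.
Proof.
rewrite (@smulP _ e n 'X (tr e n)).
- by rewrite coefXM; case: n => //= m; rewrite coef_tr.
- by move=> i _; rewrite coefX /sX; case: (i == 1%N).
- by move=> i hi; apply: coef_tr.
Qed.

Lemma sum_recl (F : nat -> K) n : \sum_(i < n.+1) F i = F 0%N + \sum_(i < n) F i.+1.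
Proof. by rewrite big_ord_recl; congr (_ + _); apply: eq_bigr => i _; rewrite lift0. Qed.

End Alg.

Theorem mainTheorem6 (K : fieldType) (R : seq nat -> Prop)
  (f g ginv : nat -> K) :
  (exists s, R s) ->
  (forall s, R s -> is_perm s) ->
  smul g ginv = scst (1 : K) ->
  sgf K (av_count (pats_1243_2143 R))
    = sadd (scst 1) (smul (sX K) (smul f ginv)) ->
  exists dinv : nat -> K,
    smul (ssub (smul (ssub (scst 1) (sX K)) g) (smul (sX K) f)) dinv = scst 1 /\
    sgf K (av_count (pats_1243_2143 (appendMax R)))
      = sadd (scst 1) (smul (sX K) (smul g dinv)).
Proof.
move=> _ hperm hg hA.
have eA : av_count (pats_1243_2143 R) = acount R by apply: funext => n; apply: av_countA.
have eB : av_count (pats_1243_2143 (appendMax R)) = bcount R.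
  by apply: funext => n; apply: av_countB.
rewrite eA in hA; rewrite eB.
have hA0 : acount R 0 = 1%N.
  have := congr1 (fun h => h 0%N) hA; rewrite /sgf /sadd smulX /= GRing.addr0.
  have : (acount R 0 <= 1)%N.
    by rewrite /acount (_ : permutations (iota 1 0) = [:: [::]]) //= addn0 leq_b1.
  case: (acount R 0) => [|[|?]] // _ /esym /eqP; by rewrite GRing.oner_eq0.
have nR := a0 hA0.
set E : nat -> K := fun n => ((bcount R n.+1)%:R)%R.
have hF : forall n, smul (sX K) (smul f ginv) n = ((acount R n)%:R - scst 1 n)%R.
  move=> n; have := congr1 (fun h => h n) hA; rewrite /sgf /sadd => ->.
  by rewrite GRing.addrC GRing.addKr.
exists (smul ginv E); split.
  rewrite -smulA smul_subl !smulA hg (smulC _ (scst 1)) smul1.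
  have -> : ssub (ssub (scst 1) (sX K)) (smul (sX K) (smul f ginv)) =
     (fun n => (scst 1 n - sX K n - ((acount R n)%:R - scst 1 n))%R).
    by apply: funext => n; rewrite /ssub hF.
  set H := (fun n => _).
  apply: funext => n; rewrite /smul (sum_recl (fun i => H i * E (n - i)%N)%R).
  case: n => [|m].
    rewrite big_ord0 /H /E /scst /sX /= hA0 (brec 0 nR) big_ord0 b0 /=.
    ring.
  rewrite (sum_recl (fun i => H i.+1 * E (m.+1 - i.+1)%N)%R).
  have S : (\sum_(i < m) H i.+2 * E (m.+1 - i.+2)%N =
            - \sum_(i < m) ((acount R i.+2 * bcount R (m.+1 - i.+1))%:R))%R.
    rewrite -GRing.sumrN; apply: eq_bigr => i _; rewrite /H /E /scst /sX /=.
    have -> : ((m.+1 - i.+2).+1 = m.+1 - i.+1)%N by have := ltn_ord i; lia.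
    rewrite GRing.natrM; ring.
  rewrite S /E (brec m.+1 nR) GRing.natrD GRing.natr_sum.
  rewrite (sum_recl (fun i => ((acount R i.+1 * bcount R (m.+1 - i))%:R)%R)).
  rewrite /H /scst /sX /= !subn0 hA0 !GRing.natrM subSS subn0.
  ring.
rewrite -(smulA g ginv E) hg smul1.
apply: funext => n; rewrite /sgf /sadd smulX.
case: n => [|m]; first by rewrite b0 GRing.addr0.
by rewrite /scst GRing.add0r.
Qed.
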